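(* Let $\mathbb{K}$ be a field, let $P_1, P_2 \in \mathbb{K}[X]$ be irreducible, let $m \geq 1$, and let $f_m : \mathbb{K}[X]/(P_1^m) \to \mathbb{K}[X]/(P_2^m)$ be a ring isomorphism stabilizing $\mathbb{K}$. Let $R \in \mathbb{K}[X]$ be such that $f_m$ sends the class of $X$ to the class of $R$, and let $Q$ be the remainder of the Euclidean division of $R$ by $P_2$ (which does not depend on the choice of $R$). If $Q' \neq 0$, then the rings $\mathbb{K}[X]/(P_1^n)$ and $\mathbb{K}[X]/(P_2^n)$ are isomorphic for all $n \geq 1$.
   Context: A ring homomorphism $f : A \to B$ between $\mathbb{K}$-algebras stabilizes $\mathbb{K}$ if there is a field automorphism $\sigma_f$ of $\mathbb{K}$ with $f(a) = \sigma_f(a)$ for all $a \in \mathbb{K}$ (with $\mathbb{K}$ identified with its image in $A$ and $B$). $Q'$ denotes the formal derivative of $Q$. *)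

(* Defs.v *)
From HB Require Import structures.
From mathcomp Require Import all_boot all_algebra.
Set Implicit Arguments. Unset Strict Implicit. Unset Printing Implicit Defensive.
Import GRing.Theory.
Local Open Scope ring_scope.

(* Normalization of a nonzero polynomial to a monic associate:
   the ideal (P^n) of K[X] equals ((monicize P)^n). *)
Definition monicize (K : fieldType) (P : {poly K}) : {poly K} :=
  (lead_coef P)^-1 *: P.

(* The ring K[X]/(P^n) is rendered as {poly %/ (monicize P ^+ n)} (mathcomp qpoly). *)

Definition stabilizes_K (K : fieldType) (P1 P2 : {poly K}) (m : nat)
  (f : {poly %/ (monicize P1 ^+ m)} -> {poly %/ (monicize P2 ^+ m)}) : Prop :=
  exists sigma : {rmorphism K -> K}, bijective sigma /\
    forall a : K, f (in_qpoly (monicize P1 ^+ m) a%:P)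
                  = in_qpoly (monicize P2 ^+ m) (sigma a)%:P.

(* Main.v *)
Require Import Defs.
From HB Require Import structures.
From mathcomp Require Import all_boot all_algebra ring zify.
Set Implicit Arguments. Unset Strict Implicit. Unset Printing Implicit Defensive.
Import GRing.Theory.
Local Open Scope ring_scope.

Section Q.
Variable K : fieldType.

Lemma mk_monicE (h : {poly K}) : h \is monic -> (1 < size h)%N -> mk_monic h = h.
Proof. by move=> mh sh; rewrite /mk_monic sh mh. Qed.

Lemma in_qpoly_val (h : {poly K}) (x : {poly %/ h}) : in_qpoly h (x : {poly K}) = x.
Proof. by apply: val_inj; exact: (in_qpoly_small (size_mk_monic x)). Qed.

Lemma in_qpoly_eq0 (h a : {poly K}) : h \is monic -> (1 < size h)%N ->
  (in_qpoly h a == 0) = (h %| a).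
Proof.
move=> mh sh; rewrite -val_eqE /= mk_monicE // -Pdiv.IdomainMonic.modpE //.
Qed.

Lemma in_qpoly_eq (h a b : {poly K}) : h \is monic -> (1 < size h)%N ->
  (in_qpoly h a == in_qpoly h b) = (h %| a - b).
Proof. by move=> mh sh; rewrite -subr_eq0 -rmorphB in_qpoly_eq0. Qed.
End Q.

Section Phi.
Variables (K : fieldType) (sig : {rmorphism K -> K}) (S h1 h2 : {poly K}).
Hypotheses (mh1 : h1 \is monic) (sh1 : (1 < size h1)%N)
  (mh2 : h2 \is monic) (sh2 : (1 < size h2)%N)
  (Hdiv : h2 %| map_poly sig h1 \Po S).

Definition psi (A : {poly K}) : {poly %/ h2} := in_qpoly h2 (map_poly sig A \Po S).

Lemma psiD A B : psi (A - B) = psi A - psi B.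
Proof. by rewrite /psi rmorphB comp_polyB rmorphB. Qed.
Lemma psiDD A B : psi (A + B) = psi A + psi B.
Proof. by rewrite /psi rmorphD comp_polyD rmorphD. Qed.
Lemma psiM A B : psi (A * B) = psi A * psi B.
Proof. by rewrite /psi rmorphM comp_polyM rmorphM. Qed.
Lemma psi1 : psi 1 = 1.
Proof. by rewrite /psi rmorph1 comp_polyC rmorph1. Qed.
Lemma psi_h1 : psi h1 = 0.
Proof. by apply/eqP; rewrite /psi in_qpoly_eq0. Qed.
Lemma psi_mod A : psi (Pdiv.Ring.rmodp A h1) = psi A.
Proof.
rewrite {2}(Pdiv.RingMonic.rdivp_eq mh1 A).
by rewrite psiDD psiM psi_h1 mulr0 add0r.
Qed.

Definition phi (x : {poly %/ h1}) : {poly %/ h2} := psi (x : {poly K}).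

Lemma phi_in A : phi (in_qpoly h1 A) = psi A.
Proof. by rewrite /phi /= mk_monicE // psi_mod. Qed.

Lemma phi_zmod : zmod_morphism phi.
Proof.
move=> x y; rewrite -(in_qpoly_val x) -(in_qpoly_val y) -rmorphB !phi_in.
exact: psiD.
Qed.
Lemma phi_monoid : monoid_morphism phi.
Proof.
split; first by rewrite -(in_qpoly1 h1) phi_in psi1.
move=> x y; rewrite -(in_qpoly_val x) -(in_qpoly_val y) -rmorphM !phi_in.
exact: psiM.
Qed.

HB.instance Definition _ := GRing.isZmodMorphism.Build _ _ phi phi_zmod.
HB.instance Definition _ := GRing.isMonoidMorphism.Build _ _ phi phi_monoid.

Definition phiR : {rmorphism {poly %/ h1} -> {poly %/ h2}} := phi.
End Phi.

Section Arith.
Variable K : fieldType.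
Implicit Types (p A B S R u v a b : {poly K}).

Lemma comp_polyXn A S n : (A ^+ n) \Po S = (A \Po S) ^+ n.
Proof. elim: n => [|n IH]; first by rewrite !expr0 comp_polyC. by rewrite !exprS comp_polyM IH. Qed.

Lemma comp_congr p S R A : p %| S - R -> p %| (A \Po S) - (A \Po R).
Proof.
move=> hSR; elim/poly_ind: A => [|A c IH]; first by rewrite !comp_poly0 subrr dvdp0.
rewrite !comp_polyD !comp_polyM !comp_polyX !comp_polyC.
have -> : (A \Po S) * S + c%:P - ((A \Po R) * R + c%:P) =
  ((A \Po S) - (A \Po R)) * S + (A \Po R) * (S - R) by ring.
by apply: dvdp_add; [apply: dvdp_mulr | apply: dvdp_mull].
Qed.

Lemma taylor2 A u v : v ^+ 2 %| (A \Po (u + v)) - (A \Po u) - (A^`() \Po u) * v.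
Proof.
elim/poly_ind: A => [|A c IH]; first by rewrite deriv0 !comp_poly0 mul0r !subr0 dvdp0.
rewrite derivMXaddC !comp_polyD !comp_polyM !comp_polyX !comp_polyC.
move: IH; set D := _ - _ - _ => IH.
have -> : (A \Po (u + v)) * (u + v) + c%:P - ((A \Po u) * u + c%:P) -
   ((A \Po u) + (A^`() \Po u) * u) * v = D * (u + v) + (A^`() \Po u) * v ^+ 2.
  rewrite /D; ring.
by apply: dvdp_add; [apply: dvdp_mulr | apply: dvdp_mull].
Qed.

Lemma irr_prime p a b : irreducible_poly p -> p %| a * b -> (p %| a) || (p %| b).
Proof.
move=> ip hab; case pa: (p %| a) => //=.
have cp : coprimep p a by rewrite irreducible_poly_coprime // pa.
by rewrite -(Gauss_dvdpr _ cp).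
Qed.

Lemma irr_prime_exp p a n : irreducible_poly p -> p %| a ^+ n -> (0 < n)%N -> p %| a.
Proof.
move=> ip; elim: n => [|n IH] //; rewrite exprS => /(irr_prime ip)/orP[//|h] _.
case: n IH h => [|n] IH h; last exact: IH.
by move: h; rewrite expr0 dvdp1; case: ip => sp _ /eqP sp1; rewrite sp1 in sp.
Qed.

Lemma pow_lemma p a b : p %| b -> p ^+ 2 %| a - b -> forall n, p ^+ n.+1 %| a ^+ n - b ^+ n.
Proof.
move=> pb pab.
have pa : p %| a.
  have -> : a = (a - b) + b by ring.
  by rewrite dvdp_add // (dvdp_trans _ pab) // dvdp_exp.
elim=> [|n IH]; first by rewrite !expr0 subrr dvdp0.
have -> : a ^+ n.+1 - b ^+ n.+1 = a ^+ n * (a - b) + b * (a ^+ n - b ^+ n).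
  rewrite !exprS; ring.
rewrite dvdp_add //.
  have -> : p ^+ n.+2 = p ^+ n * p ^+ 2 by rewrite -exprD addn2.
  by rewrite dvdp_mul // dvdp_exp2r.
by rewrite exprS dvdp_mul.
Qed.
End Arith.

Section Main.
Variable K : fieldType.
Implicit Types (p T H A S R G : {poly K}).

Lemma irr_neq0 p : irreducible_poly p -> p != 0.
Proof. by case=> sp _; rewrite -size_poly_gt0 (ltn_trans _ sp). Qed.

Lemma irr_ndvd1 p : irreducible_poly p -> ~~ (p %| 1).
Proof. by case=> sp _; rewrite dvdp1 gtn_eqF. Qed.

Lemma dvdpNN p A : p %| A -> p %| - A.
Proof. by move=> h; rewrite -mulN1r dvdp_mull. Qed.

Lemma lift_lemma (p2 : {poly K}) S G A : p2 %| (G \Po S) - 'X -> p2 %| ((A \Po G) \Po S) - A.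
Proof. by move=> hG; rewrite -comp_polyA -{2}(comp_polyXr A); apply: comp_congr. Qed.

Lemma inj_lemma (p2 : {poly K}) T S : irreducible_poly p2 ->
  (forall H, p2 %| H \Po S -> T %| H) -> p2 %| T \Po S -> ~~ (p2 ^+ 2 %| T \Po S) ->
  forall n H, p2 ^+ n %| H \Po S -> T ^+ n %| H.
Proof.
move=> ip H2 H1 H4.
have p2n0 := irr_neq0 ip.
have [U hU] : exists U, T \Po S = U * p2 by apply/dvdpP.
have cU : coprimep p2 U.
  rewrite irreducible_poly_coprime //; apply: contra H4 => pU.
  by rewrite hU expr2 dvdp_mul.
elim=> [|n IH] H hH; first by rewrite expr0 dvd1p.
have /dvdpP[H1' eH] : T %| H.
  by apply: H2; apply: dvdp_trans hH; apply: dvdp_exp.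
move: hH; rewrite eH comp_polyM hU exprSr mulrA (dvdp_mul2r _ _ p2n0).
rewrite (Gauss_dvdpl _ (coprimep_expl n cU)) => /IH hn.
by rewrite exprSr dvdp_mul.
Qed.

Lemma surj_lemma (p2 : {poly K}) T S G : irreducible_poly p2 -> p2 %| T \Po S ->
  ~~ (p2 ^+ 2 %| T \Po S) -> p2 %| (G \Po S) - 'X ->
  forall n, exists G', p2 ^+ n %| (G' \Po S) - 'X.
Proof.
move=> ip H1 H4 hG.
have lift A := @lift_lemma _ _ _ A hG.
have [U hU] : exists U, T \Po S = U * p2 by apply/dvdpP.
have cU : coprimep p2 U.
  rewrite irreducible_poly_coprime //; apply: contra H4 => pU.
  by rewrite hU expr2 dvdp_mul.
have [[u1 u2] /= hu] := Bezout_eq1_coprimepP _ _ cU.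
set b0 := u2 \Po G; set E := b0 * T.
have hE1 : p2 %| E \Po S by rewrite comp_polyM dvdp_mull.
have hE2 : p2 ^+ 2 %| p2 - (E \Po S).
  have -> : p2 - (E \Po S) = u1 * p2 ^+ 2 + (u2 - (b0 \Po S)) * (T \Po S).
    rewrite /E comp_polyM hU -{1}(mulr1 p2) -hu; ring.
  apply: dvdp_add; first by apply: dvdp_mull.
  rewrite expr2 dvdp_mul //.
  by have := lift u2; rewrite -/b0 => /dvdpNN; rewrite opprB.
elim=> [|n [Gn hGn]]; first by exists 0; rewrite expr0 dvd1p.
have [V hV] : exists V, (Gn \Po S) - 'X = V * p2 ^+ n by apply/dvdpP.
exists (Gn - E ^+ n * (V \Po G)).
have -> : ((Gn - E ^+ n * (V \Po G)) \Po S) - 'X =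
   V * (p2 ^+ n - (E \Po S) ^+ n) + (E \Po S) ^+ n * (V - ((V \Po G) \Po S)).
  rewrite comp_polyB comp_polyM comp_polyXn.
  have -> : (Gn \Po S) = V * p2 ^+ n + 'X by rewrite -hV; ring.
  ring.
apply: dvdp_add; first by apply: dvdp_mull; apply: pow_lemma.
rewrite exprSr dvdp_mul ?dvdp_exp2r //.
by have := lift V => /dvdpNN; rewrite opprB.
Qed.

Lemma deriv_lemma (p2 : {poly K}) T R G : irreducible_poly p2 ->
  (forall H, p2 %| H \Po R -> T %| H) -> p2 %| T \Po R ->
  p2 %| (G \Po R) - 'X -> p2 ^+ 2 %| T \Po R -> ~~ (p2 %| T^`() \Po R).
Proof.
move=> ip H2 H1 hG H4; apply/negP => hT'.
have lift A := @lift_lemma _ _ _ A hG.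
have [N hN] : exists N, p2 \Po G = N * T.
  apply/dvdpP; apply: H2; rewrite -comp_polyA.
  by have := lift p2; rewrite -comp_polyA (dvdp_subl _ (dvdpp p2)).
have [M hM] : exists M, (R \Po G) - 'X = M * T.
  apply/dvdpP; apply: H2; rewrite comp_polyB comp_polyX.
  by have := lift R; rewrite -comp_polyA.
have [W hW] : exists W, (G \Po R) - 'X = W * p2 by apply/dvdpP.
have hA : p2 %| R^`() * (G^`() \Po R) - 1.
  have e1 : ((R^`() \Po G) \Po R) * (G^`() \Po R) - 1 =
      (M^`() \Po R) * (T \Po R) + (M \Po R) * (T^`() \Po R).
    have := congr1 deriv hM; rewrite derivB derivX deriv_comp derivM => e.
    have c1 : (1 : {poly K}) \Po R = 1 by rewrite -polyC1 comp_polyC.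
    by have := congr1 (comp_poly R) e; rewrite comp_polyB comp_polyD !comp_polyM c1.
  have e2 : R^`() * (G^`() \Po R) - 1 =
      (((R^`() \Po G) \Po R) * (G^`() \Po R) - 1)
      - (((R^`() \Po G) \Po R) - R^`()) * (G^`() \Po R) by ring.
  rewrite e2 e1; apply: dvdp_sub; last by apply: dvdp_mulr; apply: lift.
  by apply: dvdp_add; apply: dvdp_mull.
have hB : p2 %| 1 + p2^`() * W.
  have eGR : G \Po R = 'X + W * p2 by rewrite -hW; ring.
  have t := taylor2 p2 'X (W * p2).
  rewrite -eGR comp_polyXr comp_polyXr in t.
  have t2 : p2 ^+ 2 %| p2 \Po (G \Po R).
    by rewrite comp_polyA hN comp_polyM dvdp_mull.
  have : p2 ^+ 2 %| (1 + p2^`() * W) * p2.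
    have -> : (1 + p2^`() * W) * p2 = (p2 \Po (G \Po R)) -
       ((p2 \Po (G \Po R)) - p2 - p2^`() * (W * p2)) by ring.
    apply: dvdp_sub => //; apply: dvdp_trans t.
    by rewrite exprMn dvdp_mull.
  by rewrite expr2 dvdp_mul2r // irr_neq0.
have hC : p2 %| (G^`() \Po R) * R^`().
  have := congr1 deriv hW; rewrite derivB derivX deriv_comp derivM => e.
  have -> : (G^`() \Po R) * R^`() = (1 + p2^`() * W) + W^`() * p2.
    have -> : (G^`() \Po R) * R^`() = ((G^`() \Po R) * R^`() - 1) + 1 by ring.
    rewrite e; ring.
  by rewrite dvdp_add // dvdp_mull.
have : p2 %| 1.
  have -> : 1 = (G^`() \Po R) * R^`() - (R^`() * (G^`() \Po R) - 1) by ring.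
  by apply: dvdp_sub.
by rewrite (negPf (irr_ndvd1 ip)).
Qed.

Lemma shift_lemma (p2 : {poly K}) T R : p2 != 0 -> p2 ^+ 2 %| T \Po R -> ~~ (p2 %| T^`() \Po R) ->
  ~~ (p2 ^+ 2 %| T \Po (R + p2)).
Proof.
move=> p2n0 H4 hT; apply: contra hT => h.
have t := taylor2 T R p2.
have : p2 ^+ 2 %| (T^`() \Po R) * p2.
  have -> : (T^`() \Po R) * p2 = (T \Po (R + p2)) - (T \Po R) -
     ((T \Po (R + p2)) - (T \Po R) - (T^`() \Po R) * p2) by ring.
  by apply: dvdp_sub => //; apply: dvdp_sub.
by rewrite expr2 dvdp_mul2r.
Qed.
End Main.

Section Mon.
Variable K : fieldType.
Variable P : {poly K}.
Hypothesis iP : irreducible_poly P.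

Lemma monicize_monic : monicize P \is monic.
Proof. by rewrite monicE /monicize lead_coefZ mulVf // lead_coef_eq0 irr_neq0. Qed.

Lemma monicize_eqp : monicize P %= P.
Proof. by rewrite /monicize eqp_scale // invr_eq0 lead_coef_eq0 irr_neq0. Qed.

Lemma monicize_irr : irreducible_poly (monicize P).
Proof.
have e := monicize_eqp; case: iP => sP hP; split; first by rewrite (eqp_size e).
move=> q sq; rewrite (eqp_dvdr _ e) => qP.
by apply: eqp_trans (hP q sq qP) _; rewrite eqp_sym.
Qed.

Lemma monicize_size_exp k : (0 < k)%N -> (1 < size (monicize P ^+ k))%N.
Proof.
move=> k0; have := size_exp (monicize P) k; case: monicize_irr => sP _.
move: sP; case: (size (monicize P)) => [|[|s]] // _ /=.
case: (size _) => [|[|t]] // /= h; lia.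
Qed.
End Mon.

Unset Implicit Arguments.

Theorem mainTheorem15 (K : fieldType) (P1 P2 : {poly K}) (m : nat)
  (f : {rmorphism {poly %/ (monicize P1 ^+ m)} -> {poly %/ (monicize P2 ^+ m)}})
  (R : {poly K}) :
  irreducible_poly P1 -> irreducible_poly P2 -> (1 <= m)%N ->
  bijective f -> stabilizes_K f ->
  f (in_qpoly (monicize P1 ^+ m) 'X) = in_qpoly (monicize P2 ^+ m) R ->
  (R %% P2)^`() != 0 ->
  forall n : nat, (1 <= n)%N ->
    exists g : {rmorphism {poly %/ (monicize P1 ^+ n)} -> {poly %/ (monicize P2 ^+ n)}},
      bijective g.
Proof.
move=> iP1 iP2 m1 [fi ff fi'] [sig [[si s1 s2] hsig]] hX _ n n1.
have ip1 := monicize_irr iP1; have ip2 := monicize_irr iP2.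
have mp1 := monicize_monic iP1; have mp2 := monicize_monic iP2.
pose T := map_poly sig (monicize P1).
have sm1 := monicize_size_exp iP1 m1; have sm2 := monicize_size_exp iP2 m1.
have mm1 := monic_exp m mp1; have mm2 := monic_exp m mp2.
have F A : f (in_qpoly (monicize P1 ^+ m) A) =
    in_qpoly (monicize P2 ^+ m) (map_poly sig A \Po R).
  elim/poly_ind: A => [|A c IH]; first by rewrite !(rmorph0, comp_poly0).
  rewrite rmorphD rmorphM rmorphD rmorphM IH hX hsig.
  rewrite rmorphD rmorphM /= map_polyX map_polyC /= comp_polyD comp_polyM comp_polyX comp_polyC.
  by rewrite rmorphD rmorphM.
have finj x : f x = 0 -> x = 0.
  by move=> h; apply: (can_inj ff); rewrite h rmorph0.
have hT1 : monicize P2 %| T \Po R.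
  have := F (monicize P1 ^+ m).
  rewrite (_ : in_qpoly _ (monicize P1 ^+ m) = 0); last by apply/eqP; rewrite in_qpoly_eq0.
  rewrite rmorph0 => /esym/eqP; rewrite in_qpoly_eq0 // rmorphXn comp_polyXn => h.
  apply: (irr_prime_exp ip2 _ m1); apply: dvdp_trans h; exact: dvdp_exp.
have hT2 H : monicize P2 %| H \Po R -> T %| H.
  move=> hH; pose A := map_poly si H.
  have HA : map_poly sig A = H by rewrite /A (map_polyK s2) // rmorph0.
  have : in_qpoly (monicize P1 ^+ m) (A ^+ m) = 0.
    have eA : map_poly sig (A ^+ m) = H ^+ m by rewrite -HA rmorphXn.
    apply: finj; rewrite F eA comp_polyXn; apply/eqP.
    by rewrite in_qpoly_eq0 // dvdp_exp2r.
  move/eqP; rewrite in_qpoly_eq0 // => h.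
  have : monicize P1 %| A.
    by apply: (irr_prime_exp ip1 _ m1); apply: dvdp_trans h; apply: dvdp_exp.
  by rewrite -(dvdp_map sig) HA.
have [G hG] : exists G, monicize P2 %| (G \Po R) - 'X.
  exists (map_poly sig (fi (in_qpoly (monicize P2 ^+ m) 'X) : {poly K})).
  have := F (fi (in_qpoly (monicize P2 ^+ m) 'X)); rewrite in_qpoly_val fi' => /eqP.
  rewrite eq_sym in_qpoly_eq // => h.
  by apply: dvdp_trans h; apply: dvdp_exp.
have [S [H1 H2 H4 [G' hG']]] : exists S, [/\ monicize P2 %| T \Po S,
    (forall H, monicize P2 %| H \Po S -> T %| H), ~~ (monicize P2 ^+ 2 %| T \Po S)
    & exists G, monicize P2 %| (G \Po S) - 'X].
  case: (boolP (monicize P2 ^+ 2 %| T \Po R)) => h4; last first.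
    by exists R; split=> //; exists G.
  exists (R + monicize P2).
  have hSR : monicize P2 %| (R + monicize P2) - R by rewrite addrAC subrr add0r dvdpp.
  have cg A : monicize P2 %| (A \Po (R + monicize P2)) - (A \Po R).
    exact: (@comp_congr _ _ _ _ A hSR).
  split.
  - by have := cg T; rewrite (dvdp_subl _ hT1).
  - by move=> H hH; apply: hT2; have := cg H; rewrite (dvdp_subr _ hH).
  - apply: shift_lemma => //; first exact: irr_neq0.
    exact: (deriv_lemma ip2 hT2 hT1 hG h4).
  - exists G.
    have -> : (G \Po (R + monicize P2)) - 'X =
      ((G \Po (R + monicize P2)) - (G \Po R)) + ((G \Po R) - 'X) by ring.
    by rewrite dvdp_add.
have mn1 := monic_exp n mp1; have mn2 := monic_exp n mp2.
have sn1 := monicize_size_exp iP1 n1; have sn2 := monicize_size_exp iP2 n1.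
have Hdiv : monicize P2 ^+ n %| map_poly sig (monicize P1 ^+ n) \Po S.
  by rewrite rmorphXn comp_polyXn dvdp_exp2r.
pose g := @phiR _ sig S _ _ mn1 sn1 mn2 sn2 Hdiv.
have gE A : g (in_qpoly (monicize P1 ^+ n) A) =
    in_qpoly (monicize P2 ^+ n) (map_poly sig A \Po S).
  exact: phi_in.
have ginj : injective g.
  move=> x y e; apply/eqP; rewrite -subr_eq0; apply/eqP.
  have : g (x - y) = 0 by rewrite rmorphB e subrr.
  rewrite -(in_qpoly_val (x - y)) gE => /eqP; rewrite in_qpoly_eq0 // => h.
  have := inj_lemma ip2 H2 H1 H4 h.
  rewrite -rmorphXn dvdp_map -in_qpoly_eq0 // in_qpoly_val.
  by move/eqP.
have gsurj A : exists x, g x = in_qpoly (monicize P2 ^+ n) A.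
  have [Gn hGn] := surj_lemma ip2 H1 H4 hG' n.
  have gX : g (in_qpoly (monicize P1 ^+ n) (map_poly si Gn)) =
      in_qpoly (monicize P2 ^+ n) 'X.
    by rewrite gE (map_polyK s2) ?rmorph0 //; apply/eqP; rewrite in_qpoly_eq.
  have gc c : g (in_qpoly (monicize P1 ^+ n) (si c)%:P) =
      in_qpoly (monicize P2 ^+ n) c%:P.
    by rewrite gE map_polyC /= s2 comp_polyC.
  elim/poly_ind: A => [|A c [x hx]]; first by exists 0; rewrite !rmorph0.
  exists (x * in_qpoly (monicize P1 ^+ n) (map_poly si Gn) +
          in_qpoly (monicize P1 ^+ n) (si c)%:P).
  by rewrite rmorphD rmorphM hx gX gc -rmorphM -rmorphD.
exists g.
have ex y : exists x, g x == y.
  by have [x hx] := gsurj y; exists x; rewrite hx in_qpoly_val.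
exists (fun y => xchoose (ex y)).
  by move=> x; apply: ginj; exact: (eqP (xchooseP (ex (g x)))).
by move=> y; exact: (eqP (xchooseP (ex y))).
Qed.
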